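(* Let $R$ be a von Neumann regular ring and let $K$ be a class of left $R$-modules such that $\mathbf{K}=(K,\leq_p)$ is an AEC. If $K$ is closed under submodules and has arbitrarily large models, then $\mathbf{K}$ is $\lambda$-stable for every infinite cardinal $\lambda$ with $\lambda^{|R|+\aleph_0}=\lambda$.
   Context: A ring $R$ (associative with unity) is von Neumann regular if for every $r\in R$ there is $s\in R$ with $r=rsr$. $\leq_p$ is the pure submodule relation. An AEC $(K,\leq_p)$: $K$ closed under isomorphism and unions of $\leq_p$-chains, with a Löwenheim–Skolem number. Galois types $\mathbf{gtp}(b/A;N)$ are equivalence classes of triples $(b,A,N)$ under the transitive closure of: $(b_1,A,N_1)\sim(b_2,A,N_2)$ iff there exist $N'\in K$ and pure embeddings $f_\ell:N_\ell\to N'$ fixing $A$ with $f_1(b_1)=f_2(b_2)$; $\mathbf{gS}(M)$ is the set of Galois types of single elements over $M$ in pure extensions $N\in K$. $\mathbf{K}$ is $\lambda$-stable if $|\mathbf{gS}(M)|\leq\lambda$ for all $M\in K$ of cardinality $\lambda$. *)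

(* Defs.v *)
From HB Require Import structures.
From mathcomp Require Import all_boot all_order all_algebra.
From Stdlib Require Import Relation_Operators.
Set Implicit Arguments. Unset Strict Implicit. Unset Printing Implicit Defensive.
Import GRing.Theory.
Local Open Scope ring_scope.

Definition vN_regular (R : pzRingType) : Prop :=
  forall r : R, exists s : R, r = r * s * r.

(* Left R-modules, as explicit structures (so that arbitrary classes of
   modules can be quantified over). *)
Record lmod (R : pzRingType) : Type := LMod {
  carrier :> Type;
  mzero : carrier;
  madd : carrier -> carrier -> carrier;
  mopp : carrier -> carrier;
  mscale : R -> carrier -> carrier;
  maddA : forall x y z, madd x (madd y z) = madd (madd x y) z;
  maddC : forall x y, madd x y = madd y x;
  madd0 : forall x, madd mzero x = x;
  maddN : forall x, madd (mopp x) x = mzero;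
  mscaleDr : forall r x y, mscale r (madd x y) = madd (mscale r x) (mscale r y);
  mscaleDl : forall r s x, mscale (r + s) x = madd (mscale r x) (mscale s x);
  mscaleM : forall r s x, mscale (r * s) x = mscale r (mscale s x);
  mscale1 : forall x, mscale 1 x = x
}.

Section Mods.
Variable R : pzRingType.

Definition lincomb (M : lmod R) (m : nat) (a : 'I_m -> R) (x : 'I_m -> M) : M :=
  \big[@madd R M / @mzero R M]_(j < m) mscale (a j) (x j).

Definition rlinear (M N : lmod R) (f : M -> N) : Prop :=
  (forall x y, f (madd x y) = madd (f x) (f y)) /\
  (forall r x, f (mscale r x) = mscale r (f x)).

Definition pure_emb (M N : lmod R) (f : M -> N) : Prop :=
  rlinear f /\ injective f /\
  forall (n m : nat) (A : 'I_n -> 'I_m -> R) (c : 'I_n -> M),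
    (exists x : 'I_m -> N, forall i, lincomb (A i) x = f (c i)) ->
    exists y : 'I_m -> M, forall i, lincomb (A i) y = c i.

Definition card_le (A B : Type) : Prop := exists f : A -> B, injective f.
Definition card_eq (A B : Type) : Prop := exists f : A -> B, bijective f.

Definition mclass := lmod R -> Prop.

Definition iso_closed (K : mclass) : Prop :=
  forall (M N : lmod R) (f : M -> N), rlinear f -> bijective f -> K M -> K N.

(* Closure under unions of <=_p-chains: a chain (M_i)_{i in I}, I well ordered,
   realised inside its union U via injective maps e_i, with M_i <=_p M_j for
   i <= j; then U is in K and each M_i <=_p U. *)
Definition chain_closed (K : mclass) : Prop :=
  forall (I : Type) (le : I -> I -> Prop),
    (forall i, le i i) ->
    (forall i j k, le i j -> le j k -> le i k) ->
    (forall i j, le i j -> le j i -> i = j) ->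
    (forall i j, le i j \/ le j i) ->
    well_founded (fun i j => le i j /\ i <> j) ->
  forall (U : lmod R) (M : I -> lmod R) (e : forall i, M i -> U),
    (forall i, K (M i)) ->
    (forall i, rlinear (e i)) -> (forall i, injective (e i)) ->
    (forall i j, le i j -> exists h : M i -> M j,
         pure_emb h /\ forall x, e j (h x) = e i x) ->
    (forall u : U, exists i, exists x : M i, e i x = u) ->
    K U /\ forall i, pure_emb (e i).

Definition has_LS_number (K : mclass) : Prop :=
  exists LS : Type, card_le (R + nat) LS /\
    forall (M : lmod R) (A : M -> Prop), K M ->
      exists (N : lmod R) (g : N -> M),
        K N /\ pure_emb g /\ (forall a, A a -> exists y, g y = a) /\
        card_le N ({a : M | A a} + LS).

Definition is_AEC (K : mclass) : Prop :=
  iso_closed K /\ chain_closed K /\ has_LS_number K.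

Definition sub_closed (K : mclass) : Prop :=
  forall (S N : lmod R) (f : S -> N), rlinear f -> injective f -> K N -> K S.

Definition arb_large (K : mclass) : Prop :=
  forall L : Type, exists M : lmod R, K M /\ card_le L M.

(* triples (b, M, N) with M <=_p N in K, M identified through a pure embedding *)
Record gtriple (K : mclass) (M : lmod R) : Type := GTriple {
  gN : lmod R;
  gNK : K gN;
  gf : M -> gN;
  gf_pure : pure_emb gf;
  gb : gN
}.

Definition gatomic (K : mclass) (M : lmod R) (t1 t2 : gtriple K M) : Prop :=
  exists (N' : lmod R) (g1 : gN t1 -> N') (g2 : gN t2 -> N'),
    K N' /\ pure_emb g1 /\ pure_emb g2 /\
    (forall a, g1 (gf t1 a) = g2 (gf t2 a)) /\ g1 (gb t1) = g2 (gb t2).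

Definition gequiv (K : mclass) (M : lmod R) := clos_trans _ (@gatomic K M).

(* |gS(M)| <= |L| : the Galois types over M inject into L *)
Definition gS_card_le (K : mclass) (M : lmod R) (L : Type) : Prop :=
  exists c : gtriple K M -> L, forall t1 t2, c t1 = c t2 -> gequiv t1 t2.

(* K is lambda-stable, lambda given as the cardinality of the type L *)
Definition stable_in (K : mclass) (L : Type) : Prop :=
  forall M : lmod R, K M -> card_eq M L -> gS_card_le K M L.

End Mods.

(* Main.v *)
From HB Require Import structures.
Require Import Defs.
From mathcomp Require Import all_boot all_order all_algebra.
From mathcomp Require Import boolp.
From Stdlib Require Import ProofIrrelevance ClassicalEpsilon Relation_Operators.
Set Implicit Arguments. Unset Strict Implicit. Unset Printing Implicit Defensive.
Import GRing.Theory.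
Local Open Scope ring_scope.

Section Inst.
Variables (R : pzRingType) (M : lmod R).
HB.instance Definition _ := gen_eqMixin (carrier M).
HB.instance Definition _ := gen_choiceMixin (carrier M).
HB.instance Definition _ := GRing.isZmodule.Build (carrier M)
  (@maddA R M) (@maddC R M) (@madd0 R M) (@maddN R M).
Lemma scA a b (v : carrier M) : mscale a (mscale b v) = mscale (a * b) v.
Proof. by rewrite mscaleM. Qed.
HB.instance Definition _ := GRing.Zmodule_isLmodule.Build R (carrier M)
  scA (@mscale1 R M) (@mscaleDr R M) (fun v a b => @mscaleDl R M a b v).
End Inst.


Section GI.
Variable R : pzRingType.
Hypothesis vR : vN_regular R.

Lemma reg_lemma n m (A : 'M[R]_(n,m)) (Y : 'M_(m,n)) W :
  (A - A *m Y *m A) *m W *m (A - A *m Y *m A) = A - A *m Y *m A ->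
  A *m (Y + (1%:M - Y *m A) *m W *m (1%:M - A *m Y)) *m A = A.
Proof.
move=> HZ.
have E1 : A *m (1%:M - Y *m A) = A - A *m Y *m A.
  by rewrite mulmxBr mulmx1 mulmxA.
have E2 : (1%:M - A *m Y) *m A = A - A *m Y *m A.
  by rewrite mulmxBl mul1mx.
rewrite mulmxDr mulmxDl.
rewrite -[A *m ((1%:M - Y *m A) *m W *m (1%:M - A *m Y)) *m A]mulmxA.
rewrite !mulmxA E1 -[(A - A *m Y *m A) *m W *m (1%:M - A *m Y) *m A]mulmxA E2 HZ.
by rewrite addrC subrK.
Qed.

Lemma col_reg n : forall k (a : 'M[R]_(n,1)), (forall i : 'I_n, (k <= i)%N -> a i 0 = 0) ->
  exists g : 'M_(1,n), a *m g *m a = a.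
Proof.
elim=> [|k IH] a Ha.
  exists 0; rewrite mulmx0 mul0mx; apply/matrixP=> i j; rewrite !mxE.
  by rewrite (ord1 j) Ha // mxE.
case: (ltnP k n) => kn; last first.
  by apply: IH => i ki; exfalso; move: (ltn_ord i); rewrite ltnNge (leq_trans kn ki).
set i0 := Ordinal kn.
have [s Hs] := vR (a i0 0).
pose y : 'M_(1,n) := \row_j (if j == i0 then s else 0).
have Ey : forall i, (a *m y *m a) i 0 = a i 0 * s * a i0 0.
  move=> i; rewrite mxE (bigD1 i0) //= big1 ?addr0.
    by rewrite mxE big_ord1 !mxE eqxx.
  move=> j /negbTE hj; rewrite mxE big_ord1 !mxE hj; by rewrite mulr0 mul0r.
have Hz : forall i : 'I_n, (k <= i)%N -> (a - a *m y *m a) i 0 = 0.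
  move=> i ki; rewrite [LHS]mxE [X in _ + X]mxE Ey.
  case: (ltngtP k i) => [ki2|ik2|ik].
    by rewrite Ha // !mul0r subrr.
    by move: ki; rewrite leqNgt ik2.
  have -> : i = i0 by apply/val_inj; rewrite /= ik.
  by rewrite -Hs subrr.
have [w Hw] := IH _ Hz.
by eexists; apply: reg_lemma Hw.
Qed.

Lemma col_full n (a : 'M[R]_(n,1)) : exists g : 'M_(1,n), a *m g *m a = a.
Proof.
apply: (@col_reg n n) => i ni; exfalso; move: (ltn_ord i); by rewrite ltnNge ni.
Qed.

Lemma mx_reg n m : forall k (A : 'M[R]_(n,m)), (forall i (j : 'I_m), (k <= j)%N -> A i j = 0) ->
  exists G : 'M_(m,n), A *m G *m A = A.
Proof.
elim=> [|k IH] A HA.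
  exists 0; rewrite mulmx0 mul0mx; apply/matrixP=> i j; rewrite !mxE HA //.
case: (ltnP k m) => km; last first.
  by apply: IH => i j kj; exfalso; move: (ltn_ord j); rewrite ltnNge (leq_trans km kj).
set j0 := Ordinal km.
have [g Hg] := col_full (col j0 A).
pose Y : 'M_(m,n) := \matrix_(j, i) (if j == j0 then g 0 i else 0).
have Ey : forall i j, (A *m Y *m A) i j = \sum_l A i j0 * g 0 l * A l j.
  move=> i j; rewrite mxE; apply: eq_bigr => l _.
  rewrite mxE (bigD1 j0) //= big1 ?addr0.
    by rewrite mxE eqxx.
  by move=> j' /negbTE hj; rewrite mxE hj mulr0.
have Eg : forall i, \sum_l A i j0 * g 0 l * A l j0 = A i j0.
  move=> i; transitivity ((col j0 A *m g *m col j0 A) i 0); last by rewrite Hg mxE.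
  rewrite mxE; apply: eq_bigr => l _; rewrite !mxE big_ord1 !mxE //.
have Hz : forall i (j : 'I_m), (k <= j)%N -> (A - A *m Y *m A) i j = 0.
  move=> i j kj; rewrite [LHS]mxE [X in _ + X]mxE Ey.
  case: (ltngtP k j) => [kj2|jk2|jk].
    rewrite (HA i j kj2) big1 ?subrr // => l _; by rewrite (HA l j kj2) mulr0.
    by move: kj; rewrite leqNgt jk2.
  have -> : j = j0 by apply/val_inj; rewrite /= jk.
  by rewrite Eg subrr.
have [W HW] := IH _ Hz.
by eexists; apply: reg_lemma HW.
Qed.

Lemma mx_full n m (A : 'M[R]_(n,m)) : exists G : 'M_(m,n), A *m G *m A = A.
Proof.
apply: (@mx_reg n m m) => i j mj; exfalso; move: (ltn_ord j); by rewrite ltnNge mj.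
Qed.
End GI.

Section B.
Variable R : pzRingType.
Hypothesis vR : vN_regular R.

Lemma rlin0 (M N : lmod R) (f : M -> N) : rlinear f -> f 0 = 0.
Proof.
case=> Ha _; have Ha' : forall x y, f (x + y) = f x + f y := Ha.
apply/(@addrI _ (f 0)); by rewrite addr0 -Ha' addr0.
Qed.

Lemma rlin_sum (M N : lmod R) (f : M -> N) I (r : seq I) (P : pred I) F : rlinear f ->
  f (\sum_(i <- r | P i) F i) = \sum_(i <- r | P i) f (F i).
Proof.
move=> hf; have := rlin0 hf; case: hf => Ha _ H0.
have Ha' : forall x y, f (x + y) = f x + f y := Ha.
exact: (big_morph f Ha' H0).
Qed.

Lemma inj_pure (M N : lmod R) (f : M -> N) : rlinear f -> injective f -> pure_emb f.
Proof.
move=> hf finj; split=> //; split=> // n m A c [x Hx].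
pose Am : 'M[R]_(n,m) := \matrix_(i, k) A i k.
have [G HG] := mx_full vR Am.
exists (fun j => \sum_l G j l *: c l) => i.
apply: finj; rewrite -Hx.
rewrite /lincomb.
change (f (\sum_(j < m) A i j *: (\sum_l G j l *: c l)) = \sum_(k < m) A i k *: x k).
rewrite rlin_sum //.
have fs : forall r (v : M), f (r *: v) = r *: f v by case: hf.
under eq_bigr => j _ do rewrite fs rlin_sum //.
under eq_bigr => j _ do under eq_bigr => l _ do rewrite fs -Hx /lincomb.
have EA : forall k, A i k = \sum_l (\sum_j A i j * G j l) * A l k.
  move=> k; move/matrixP: HG => /(_ i k); rewrite !mxE => <-.
  by apply: eq_bigr => l _; rewrite !mxE; congr (_ * _); apply: eq_bigr => j _; rewrite !mxE.
under [RHS]eq_bigr => k _ do rewrite EA scaler_suml.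
under [RHS]eq_bigr => k _ do under eq_bigr => l _ do rewrite mulr_suml scaler_suml.
under eq_bigr => j _ do rewrite scaler_sumr.
under eq_bigr => j _ do under eq_bigr => l _ do rewrite !scaler_sumr.
have sc : forall r (v : N), mscale r v = r *: v by [].
under eq_bigr => j _ do under eq_bigr => l _ do under eq_bigr => k _ do rewrite sc !scalerA.
rewrite exchange_big /=.
under eq_bigr => l _ do rewrite exchange_big /=.
by rewrite exchange_big.
Qed.
End B.

Section C.
Variable R : pzRingType.

Lemma sig_eq (T : Type) (P : T -> Prop) (x y : {a | P a}) : sval x = sval y -> x = y.
Proof.
case: x => a pa; case: y => b pb /= e; subst b; by rewrite (proof_irrelevance _ pa pb).
Qed.

Section Sub.
Variables (N : lmod R) (P : N -> Prop) (h0 : P 0)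
  (hD : forall x y, P x -> P y -> P (x + y)) (hN : forall x, P x -> P (- x))
  (hZ : forall r x, P x -> P (r *: x)).

Definition subm : lmod R.
refine (@LMod R {x | P x} (exist _ 0 h0)
  (fun x y => exist _ (sval x + sval y) (hD (svalP x) (svalP y)))
  (fun x => exist _ (- sval x) (hN (svalP x)))
  (fun r x => exist _ (r *: sval x) (hZ r (svalP x))) _ _ _ _ _ _ _ _);
  move=> *; apply: sig_eq => /=.
- by rewrite addrA.
- by rewrite addrC.
- by rewrite add0r.
- by rewrite addNr.
- by rewrite scalerDr.
- by rewrite scalerDl.
- by rewrite scalerA.
- by rewrite scale1r.
Defined.

Definition incl (x : subm) : N := sval x.

Lemma incl_lin : rlinear incl.
Proof. by split. Qed.

Lemma incl_inj : injective incl.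
Proof. move=> x y; exact: sig_eq. Qed.
End Sub.
End C.

Lemma zm1 (V : zmodType) (a b c d : V) : a + b = c + d -> a - c = d - b.
Proof. by move=> H; apply/eqP; rewrite subr_eq addrAC (addrC d) -H addrK. Qed.
Lemma zm2 (V : zmodType) (a b c d : V) : a - c = d - b -> a + b = c + d.
Proof. move=> H; have -> : a = (d - b) + c by rewrite -H subrK.
by rewrite addrAC subrK addrC. Qed.

Section D.
Variable R : pzRingType.

Section Lin.
Variables (M N : lmod R) (f : M -> N) (hf : rlinear f).
Lemma fD x y : f (x + y) = f x + f y. Proof. by case: hf => H _; exact: H. Qed.
Lemma fZ r x : f (r *: x) = r *: f x. Proof. by case: hf => _ H; exact: H. Qed.
Lemma f0 : f 0 = 0. Proof. exact: rlin0. Qed.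
Lemma fN x : f (- x) = - f x.
Proof. apply: (addIr (f x)); by rewrite -fD !addNr f0. Qed.
Lemma fB x y : f (x - y) = f x - f y. Proof. by rewrite fD fN. Qed.
End Lin.

Section Span.
Variables (M N : lmod R) (f : M -> N) (hf : rlinear f) (b : N).
Definition Pspan (y : N) := exists r m, y = r *: b + f m.
Lemma ps0 : Pspan 0.
Proof. by exists 0, 0; rewrite scale0r (f0 hf) addr0. Qed.
Lemma psD x y : Pspan x -> Pspan y -> Pspan (x + y).
Proof.
move=> [r [m ->]] [r' [m' ->]]; exists (r + r'), (m + m').
by rewrite scalerDl (fD hf) addrACA.
Qed.
Lemma psN x : Pspan x -> Pspan (- x).
Proof.
move=> [r [m ->]]; exists (- r), (- m).
by rewrite scaleNr (fN hf) opprD.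
Qed.
Lemma psZ s x : Pspan x -> Pspan (s *: x).
Proof.
move=> [r [m ->]]; exists (s * r), (s *: m).
by rewrite scalerDr scalerA (fZ hf).
Qed.
Definition Sp := subm ps0 psD psN psZ.
Definition fS (m : M) : Sp := exist _ (f m) (ex_intro _ 0 (ex_intro _ m
  (esym (etrans (congr1 (fun z => z + f m) (scale0r b)) (add0r (f m)))))).
Definition bS : Sp := exist _ b (ex_intro _ 1 (ex_intro _ 0
  (esym (etrans (congr2 (fun u v => u + v) (scale1r b) (f0 hf)) (addr0 b))))).
Lemma fS_lin : rlinear fS.
Proof.
split=> [x y|r x]; apply: sig_eq => /=; [exact: (fD hf) | exact: (fZ hf)].
Qed.
Lemma fS_inj : injective f -> injective fS.
Proof. by move=> fi x y /(congr1 (@sval _ _)) /= /fi. Qed.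
End Span.
End D.

Section E.
Variable R : pzRingType.
Hypothesis vR : vN_regular R.
Variable K : mclass R.
Hypothesis sK : sub_closed K.
Variable M : lmod R.

Lemma gatomic_sym (t1 t2 : gtriple K M) : gatomic t1 t2 -> gatomic t2 t1.
Proof.
move=> [N' [g1 [g2 [KN [p1 [p2 [h1 h2]]]]]]].
by exists N', g2, g1; do 4!split=> //; move=> a; rewrite h1.
Qed.

Lemma pure_lin (A B : lmod R) (f : A -> B) : pure_emb f -> rlinear f.
Proof. by case. Qed.
Lemma pure_inj (A B : lmod R) (f : A -> B) : pure_emb f -> injective f.
Proof. by case=> _ []. Qed.

Lemma id_pure (A : lmod R) : pure_emb (fun x : A => x).
Proof. apply: (inj_pure vR); [by split | by move=> x y]. Qed.

Definition tsub (t : gtriple K M) : gtriple K M.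
refine (@GTriple R K M (Sp (pure_lin (gf_pure t)) (gb t)) _
  (fS (pure_lin (gf_pure t)) (gb t)) _ (bS (pure_lin (gf_pure t)) (gb t))).
- apply: (sK (@incl_lin _ _ _ _ _ _ _) (@incl_inj _ _ _ _ _ _ _) (gNK t)).
- apply: (inj_pure vR); [exact: fS_lin | apply: fS_inj; exact: pure_inj (gf_pure t)].
Defined.

Lemma atomic_sub (t : gtriple K M) : gatomic t (tsub t).
Proof.
exists (gN t), (fun x => x), (fun y : gN (tsub t) => sval y).
have h3 : pure_emb (fun y : gN (tsub t) => sval y).
  apply: (inj_pure vR); [exact: incl_lin | exact: incl_inj].
have h1 := gNK t.
have h2 := @id_pure (gN t).
by [].
Qed.
End E.

Section F.
Variable R : pzRingType.
Variable M : lmod R.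

Lemma wd (N1 N2 : lmod R) (f1 : M -> N1) (f2 : M -> N2) (hf1 : rlinear f1) (hf2 : rlinear f2)
  b1 b2 (Q : forall r m, r *: b2 = f2 m -> r *: b1 = f1 m) r m r' m' :
  r *: b2 + f2 m = r' *: b2 + f2 m' -> r *: b1 + f1 m = r' *: b1 + f1 m'.
Proof.
move/zm1 => H; apply: zm2.
rewrite -scalerBl -(fB hf1); apply: Q; by rewrite scalerBl (fB hf2).
Qed.

Section Iso.
Variables (N1 N2 : lmod R) (f1 : M -> N1) (f2 : M -> N2) (hf1 : rlinear f1) (hf2 : rlinear f2)
  (b1 : N1) (b2 : N2).
Hypothesis Q12 : forall r m, r *: b2 = f2 m -> r *: b1 = f1 m.
Hypothesis Q21 : forall r m, r *: b1 = f1 m -> r *: b2 = f2 m.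

Lemma repP (y : Sp hf2 b2) : exists p : R * M, sval y = p.1 *: b2 + f2 p.2.
Proof. by case: y => y [r [m e]]; exists (r, m). Qed.
Definition rep y := proj1_sig (constructive_indefinite_description _ (repP y)).
Lemma repE y : sval y = (rep y).1 *: b2 + f2 (rep y).2.
Proof. exact: (proj2_sig (constructive_indefinite_description _ (repP y))). Qed.

Definition phi (y : Sp hf2 b2) : Sp hf1 b1 :=
  exist _ ((rep y).1 *: b1 + f1 (rep y).2) (ex_intro _ (rep y).1 (ex_intro _ (rep y).2 erefl)).

Lemma phiE y r m : sval y = r *: b2 + f2 m -> sval (phi y) = r *: b1 + f1 m.
Proof. move=> H; rewrite /=; apply: (wd hf1 hf2 Q12); by rewrite -repE. Qed.

Lemma phi_lin : rlinear phi.
Proof.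
split=> [x y|s x]; apply: sig_eq.
- have H1 : sval (madd x y) = ((rep x).1 + (rep y).1) *: b2 + f2 ((rep x).2 + (rep y).2).
    have -> : sval (madd x y) = sval x + sval y by [].
    rewrite (repE x) (repE y).
    by rewrite scalerDl (fD hf2) addrACA.
  rewrite (phiE H1).
  have -> : sval (madd (phi x) (phi y)) = sval (phi x) + sval (phi y) by [].
  rewrite (phiE (repE x)) (phiE (repE y)).
  by rewrite scalerDl (fD hf1) addrACA.
- have H1 : sval (mscale s x) = (s * (rep x).1) *: b2 + f2 (s *: (rep x).2).
    have -> : sval (mscale s x) = s *: sval x by [].
    rewrite (repE x).
    by rewrite scalerDr scalerA (fZ hf2).
  rewrite (phiE H1).
  have -> : sval (mscale s (phi x)) = s *: sval (phi x) by [].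
  by rewrite (phiE (repE x)) scalerDr scalerA (fZ hf1).
Qed.

Lemma phi_inj : injective phi.
Proof.
move=> x y /(congr1 (@sval _ _)); rewrite (phiE (repE x)) (phiE (repE y)) => H.
apply: sig_eq; rewrite (repE x) (repE y).
exact: (wd hf2 hf1 Q21 H).
Qed.
End Iso.
End F.

Section G.
Variable R : pzRingType.
Hypothesis vR : vN_regular R.
Variable K : mclass R.
Hypothesis sK : sub_closed K.
Variable M : lmod R.

Definition pt (t : gtriple K M) (r : R) : option M :=
  match excluded_middle_informative (exists m, r *: gb t = gf t m) with
  | left h => Some (proj1_sig (constructive_indefinite_description _ h))
  | right _ => None
  end.

Lemma pt_Q (t1 t2 : gtriple K M) : (forall r, pt t1 r = pt t2 r) ->
  forall r m, r *: gb t2 = gf t2 m -> r *: gb t1 = gf t1 m.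
Proof.
move=> H r m e; have := H r; rewrite /pt.
destruct (excluded_middle_informative (exists m, r *: gb t2 = gf t2 m)) as [h2|h2];
  last by exfalso; apply: h2; exists m.
destruct (excluded_middle_informative (exists m, r *: gb t1 = gf t1 m)) as [h1|h1]; last by [].
case: (constructive_indefinite_description _ h1) => m1 e1 /=.
case: (constructive_indefinite_description _ h2) => m2 e2 /= [em]; subst m2.
have -> : m = m1 by apply: (pure_inj (gf_pure t2)); rewrite -e -e2.
exact: e1.
Qed.

Lemma atomic_iso (t1 t2 : gtriple K M) : (forall r, pt t1 r = pt t2 r) ->
  gatomic (tsub vR sK t1) (tsub vR sK t2).
Proof.
move=> H.
have Q12 := pt_Q H.
have Q21 : forall r m, r *: gb t1 = gf t1 m -> r *: gb t2 = gf t2 m.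
  by apply: pt_Q => r; rewrite H.
set hf1 := pure_lin (gf_pure t1); set hf2 := pure_lin (gf_pure t2).
exists (gN (tsub vR sK t1)), (fun x => x), (@phi _ _ _ _ _ _ hf1 hf2 (gb t1) (gb t2)).
have p3 : pure_emb (@phi _ _ _ _ _ _ hf1 hf2 (gb t1) (gb t2)).
  apply: (inj_pure vR); [exact: phi_lin | exact: phi_inj].
have h1 := gNK (tsub vR sK t1).
have h2 := @id_pure _ vR (gN (tsub vR sK t1)).
split=> //; split=> //; split=> //; split.
- move=> a; apply: sig_eq; symmetry.
  rewrite (phiE hf1 hf2 Q12 (r:=0) (m:=a)) /=; by rewrite scale0r add0r.
- apply: sig_eq; symmetry.
  rewrite (phiE hf1 hf2 Q12 (r:=1) (m:=0)) /=.
    by rewrite scale1r (f0 hf1) addr0.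
  by rewrite scale1r (f0 hf2) addr0.
Qed.

Lemma equiv_of_pt (t1 t2 : gtriple K M) : (forall r, pt t1 r = pt t2 r) -> gequiv t1 t2.
Proof.
move=> H.
apply: (t_trans _ _ _ (tsub vR sK t1)); first exact: t_step (atomic_sub vR sK t1).
apply: (t_trans _ _ _ (tsub vR sK t2)); first exact: t_step (atomic_iso H).
exact: t_step (gatomic_sym (atomic_sub vR sK t2)).
Qed.
End G.

Lemma opt_inj (L : Type) (i : nat -> L) : injective i ->
  exists h : option L -> L, injective h.
Proof.
move=> iinj.
pose h (o : option L) : L := match o with
  | None => i 0
  | Some l => match excluded_middle_informative (exists k, l = i k) with
     | left e => i (S (proj1_sig (constructive_indefinite_description _ e)))
     | right _ => l end end.
exists h => [[l|] [l'|]] /=.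
- destruct (excluded_middle_informative (exists k, l = i k)) as [e|e];
  destruct (excluded_middle_informative (exists k, l' = i k)) as [e'|e'].
  + case: (constructive_indefinite_description _ e) => k ek.
    case: (constructive_indefinite_description _ e') => k' ek' /= /iinj [ekk].
    by rewrite ek ek' ekk.
  + case: (constructive_indefinite_description _ e) => k ek /= E.
    by exfalso; apply: e'; exists k.+1.
  + case: (constructive_indefinite_description _ e') => k ek /= E.
    by exfalso; apply: e; exists k.+1.
  + by move=> ->.
- destruct (excluded_middle_informative (exists k, l = i k)) as [e|e].
  + by case: (constructive_indefinite_description _ e) => k ek /= /iinj.
  + by move=> E; exfalso; apply: e; exists 0.
- destruct (excluded_middle_informative (exists k, l' = i k)) as [e|e].
  + by case: (constructive_indefinite_description _ e) => k ek /= /iinj.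
  + by move=> E; exfalso; apply: e; exists 0.
- by [].
Qed.

Local Close Scope ring_scope.
Theorem lemma5p7 (R : pzRingType) (K : lmod R -> Prop) :
  vN_regular R -> is_AEC K -> sub_closed K -> arb_large K ->
  forall L : Type, card_le nat L -> card_eq ((R + nat) -> L) L ->
  stable_in K L.
Proof.
move=> vR _ sK _ L [i iinj] [psi psibij] M KM [ph phbij].
have psiinj := bij_inj psibij.
have phinj := bij_inj phbij.
have [h hinj] := opt_inj iinj.
pose e (o : option M) : L := h (omap ph o).
have einj : injective e.
  move=> [x|] [y|] /hinj /= E.
  by case: E => /phinj ->.
  by [].
  by [].
  by [].
exists (fun t => psi (fun s => match s with inl r => e (pt t r) | inr _ => i 0 end)).
move=> t1 t2 /psiinj Hc.
apply: (equiv_of_pt vR sK) => r.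
apply: einj.
exact: (congr1 (fun F => F (inl r)) Hc).
Qed.
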